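(* Let $\mathcal{B}=(T,\bowtie)$ be a block and let $(B_1,\dots,B_k)$ be a legal partition of $T$. Then $\mathrm{LevelSchedule}(B_1,\dots,B_k)$ returns a valid schedule of $\mathcal{B}$.
   Context: A block consists of a finite set $T$ of transactions with a symmetric irreflexive conflict relation $\bowtie$ on $T$. A set $A\subseteq T$ is conflict-free if no two elements of $A$ conflict. A legal partition of $T$ is an ordered sequence $(B_1,\dots,B_k)$ of pairwise disjoint conflict-free sets whose union is $T$. A schedule is a set $\mathcal S\subseteq T\times T$ such that the directed graph $(T,\mathcal S)$ is acyclic; it is valid if for every pair $tx\bowtie tx'$ the graph $(T,\mathcal S)$ contains a directed path from $tx$ to $tx'$ or from $tx'$ to $tx$. $\mathrm{LevelSchedule}(B_1,\dots,B_k)$ is computed as follows: set $B_0=\emptyset$ and $\mathcal S=\emptyset$; for $i=1,\dots,k$ (increasing) and, for each such $i$, for $j=i-1,i-2,\dots,0$ (decreasing): let $E=\{(u,v)\in B_j\times B_i : u\bowtie v\}$, let $P$ be the set of pairs $(x,y)$ such that the current directed graph $(T,\mathcal S)$ contains a directed path from $x$ to $y$, and replace $\mathcal S$ by $\mathcal S\cup(E\setminus P)$. The output is the final $\mathcal S$. *)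

(* Defs.v *)
From mathcomp Require Import all_boot.
Set Implicit Arguments. Unset Strict Implicit. Unset Printing Implicit Defensive.

(* A block: a finite type T of transactions with a conflict relation [cf]. *)
Definition is_conflict_rel (T : finType) (cf : rel T) : Prop :=
  symmetric cf /\ irreflexive cf.

Definition conflict_free (T : finType) (cf : rel T) (A : {set T}) : bool :=
  [forall x in A, forall y in A, ~~ cf x y].

Definition legal_partition (T : finType) (cf : rel T) (Bs : seq {set T}) : Prop :=
  (forall i j, (i < size Bs)%N -> (j < size Bs)%N -> i <> j ->
     [disjoint nth set0 Bs i & nth set0 Bs j]) /\
  (forall B, B \in Bs -> conflict_free cf B) /\
  \bigcup_(B <- Bs) B = [set: T].

Definition edge_rel (T : finType) (S : {set T * T}) : rel T :=
  fun x y => (x, y) \in S.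

Definition reach (T : finType) (S : {set T * T}) (x y : T) : bool :=
  [exists z, edge_rel S x z && connect (edge_rel S) z y].

Definition acyclic (T : finType) (S : {set T * T}) : Prop :=
  forall x, ~~ reach S x x.

Definition schedule (T : finType) (S : {set T * T}) : Prop := acyclic S.

Definition valid_schedule (T : finType) (cf : rel T) (S : {set T * T}) : Prop :=
  schedule S /\ forall x y, cf x y -> reach S x y || reach S y x.

(* B_i with the convention B_0 = set0 and B_i = i-th block (1-based). *)
Definition blk (T : finType) (Bs : seq {set T}) (i : nat) : {set T} :=
  if i is i'.+1 then nth set0 Bs i' else set0.

Definition level_step (T : finType) (cf : rel T) (Bs : seq {set T})
    (i j : nat) (S : {set T * T}) : {set T * T} :=
  S :|: [set p : T * T | [&& p.1 \in blk Bs j, p.2 \in blk Bs i, cf p.1 p.2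
                            & ~~ reach S p.1 p.2]].

(* Inner loop for j = i-1, i-2, ..., 0 (decreasing). *)
Fixpoint inner_loop (T : finType) (cf : rel T) (Bs : seq {set T})
    (i n : nat) (S : {set T * T}) : {set T * T} :=
  match n with
  | 0 => S
  | n'.+1 => inner_loop cf Bs i n' (level_step cf Bs i n' S)
  end.

Definition level_schedule (T : finType) (cf : rel T) (Bs : seq {set T})
    : {set T * T} :=
  foldl (fun S i => inner_loop cf Bs i i S) set0 (iota 1 (size Bs)).

(* Main.v *)
Require Import Defs.
From mathcomp Require Import all_boot.
Set Implicit Arguments. Unset Strict Implicit.

Section P.
Variables (T : finType) (cf : rel T) (Bs : seq {set T}).
Implicit Types (S : {set T * T}).

Lemma reach_mono (S S' : {set T * T}) x y :
  S \subset S' -> reach S x y -> reach S' x y.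
Proof.
move=> sub /existsP [z /andP [exz czy]]; apply/existsP; exists z.
rewrite /edge_rel (subsetP sub _ exz) /=.
apply: (connect_sub _ czy) => u v huv; apply: connect1.
exact: (subsetP sub).
Qed.

Lemma step_sub i j S : S \subset level_step cf Bs i j S.
Proof. exact: subsetUl. Qed.

Lemma inner_sub i n S : S \subset inner_loop cf Bs i n S.
Proof.
elim: n S => [|n IH] S /=; first exact: subxx.
exact: subset_trans (step_sub _ _ _) (IH _).
Qed.

Definition stepf S i := inner_loop cf Bs i i S.

Lemma fold_sub s S : S \subset foldl stepf S s.
Proof.
elim: s S => [|i s IH] S /=; first exact: subxx.
exact: subset_trans (inner_sub _ _ _) (IH _).
Qed.

Lemma step_reach i j S x y : x \in blk Bs j -> y \in blk Bs i -> cf x y ->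
  reach (level_step cf Bs i j S) x y.
Proof.
move=> hx hy hc; case r: (reach S x y); first exact: reach_mono (step_sub _ _ _) r.
apply/existsP; exists y; rewrite connect0 andbT /edge_rel /level_step.
by rewrite !inE /= hx hy hc r orbT.
Qed.

Lemma inner_reach i n S j x y : j < n -> x \in blk Bs j -> y \in blk Bs i -> cf x y ->
  reach (inner_loop cf Bs i n S) x y.
Proof.
elim: n S => [|n IH] S //= hj hx hy hc.
rewrite ltnS leq_eqVlt in hj; case/orP: hj => [/eqP <-|hj]; last exact: IH.
exact: reach_mono (inner_sub _ _ _) (step_reach _ hx hy hc).
Qed.

Lemma fold_reach s S a b x y : b \in s -> a < b -> x \in blk Bs a -> y \in blk Bs b ->
  cf x y -> reach (foldl stepf S s) x y.
Proof.
elim: s S => [|i s IH] S //=; rewrite inE => /orP [/eqP ->|hb] hab hx hy hc.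
  exact: reach_mono (fold_sub _ _) (inner_reach _ hab hx hy hc).
exact: IH.
Qed.

Definition lvl x := find (fun B : {set T} => x \in B) Bs.

Hypothesis hdisj : forall i j, (i < size Bs)%N -> (j < size Bs)%N -> i <> j ->
     [disjoint nth set0 Bs i & nth set0 Bs j].

Lemma lvl_nth x k : x \in nth set0 Bs k -> lvl x = k /\ k < size Bs.
Proof.
move=> hx.
have hk : k < size Bs.
  by rewrite ltnNge; apply/negP => hk; move: hx; rewrite nth_default // inE.
split=> //.
have hh : has (fun B : {set T} => x \in B) Bs.
  by apply/(has_nthP set0); exists k.
have hm := hh; rewrite has_find in hm.
case: (ltngtP (lvl x) k) => // h.
- have hx' : x \in nth set0 Bs (lvl x) by exact: (nth_find set0 hh).
  have hne : lvl x <> k by move=> e; rewrite e ltnn in h.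
  have := hdisj hm hk hne.
  by move=> hd; rewrite (disjointFr hd hx') in hx.
- by have := before_find set0 h; rewrite hx.
Qed.

Definition inv (S : {set T * T}) := forall p, p \in S -> lvl p.1 < lvl p.2.

Lemma step_inv i j S : j < i -> inv S -> inv (level_step cf Bs i j S).
Proof.
move=> hji hS p; rewrite inE => /orP [/hS //|]; rewrite inE => /and4P [h1 h2 _ _].
move: h1 h2; case: j hji => [|j]; first by rewrite /= inE.
case: i => [//|i] hji /= /lvl_nth [-> _] /lvl_nth [-> _]; exact: hji.
Qed.

Lemma inner_inv i n S : n <= i -> inv S -> inv (inner_loop cf Bs i n S).
Proof.
elim: n S => [|n IH] S //= hn hS.
by apply: IH; [exact: ltnW | exact: step_inv].
Qed.

Lemma fold_inv s S : inv S -> inv (foldl stepf S s).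
Proof.
elim: s S => [|i s IH] S //= hS; apply: IH; exact: inner_inv.
Qed.

Lemma inv_reach S x y : inv S -> reach S x y -> lvl x < lvl y.
Proof.
move=> hS /existsP [z /andP [exz /connectP [p hp ->]]].
apply: (leq_trans (hS _ exz)) => /=.
elim: p z hp {exz} => [|a p IHp] z //= /andP [hza hp].
exact: leq_trans (ltnW (hS _ hza)) (IHp _ hp).
Qed.

End P.

Lemma in_cover (T : finType) (s : seq {set T}) x :
  x \in \bigcup_(B <- s) B -> has (fun B : {set T} => x \in B) s.
Proof.
elim: s => [|B s IH]; first by rewrite big_nil inE.
by rewrite big_cons inE /= => /orP [->|/IH ->] //; rewrite orbT.
Qed.

Theorem lemma1 (T : finType) (cf : rel T) (Bs : seq {set T}) :
  is_conflict_rel cf -> legal_partition cf Bs ->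
  valid_schedule cf (level_schedule cf Bs).
Proof.
move=> [hsym hirr] [hdisj [hcf hcov]].
have hinv : inv Bs (level_schedule cf Bs).
  by apply: (fold_inv hdisj) => p; rewrite in_set0.
split.
  move=> x; apply/negP => /(inv_reach hinv); by rewrite ltnn.
have hlv : forall x, x \in nth set0 Bs (lvl Bs x) /\ lvl Bs x < size Bs.
  move=> x; have hh : has (fun B : {set T} => x \in B) Bs.
    by apply: in_cover; rewrite hcov inE.
  split; first exact: (nth_find set0 hh).
  by rewrite -has_find.
have key : forall x y, cf x y -> lvl Bs x < lvl Bs y -> reach (level_schedule cf Bs) x y.
  move=> x y hc hl; have [hx _] := hlv x; have [hy hys] := hlv y.
  apply: (@fold_reach _ cf Bs _ _ (lvl Bs x).+1 (lvl Bs y).+1) => //.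
  by rewrite mem_iota /= add1n ltnS hys.
move=> x y hc; case: (ltngtP (lvl Bs x) (lvl Bs y)) => h.
- by rewrite key.
- by rewrite (key y x) ?orbT // hsym.
- exfalso; have [hx _] := hlv x; have [hy hys] := hlv y.
  rewrite h in hx.
  have := hcf _ (mem_nth set0 hys).
  move=> /forallP /(_ x) /implyP /(_ hx) /forallP /(_ y) /implyP /(_ hy).
  by rewrite hc.
Qed.
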